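(* Let $X$ be a nonempty set, $f:X\to X$ a function, and $\tau_2$ the fuzzy topology on $X$ defined below. Then $(X,\tau_2)$ is normal.
   Context: A fuzzy subset of $X$ is a function $\mu:X\to[0,1]$; union is the pointwise supremum, intersection the pointwise minimum, complement $1-\mu$; $\emptyset$ is the constant $0$ and $X$ the constant $1$. A fuzzy topology is a family of fuzzy subsets containing $\emptyset$ and $X$, closed under arbitrary unions and finite intersections; complements of open fuzzy sets are closed; the topology generated by a base $\mathbb{B}$ consists of $\emptyset$ and all unions of subfamilies of $\mathbb{B}$. $\mathbb{N}=\{1,2,\dots\}$, $f^0=\mathrm{id}_X$, $f^{n+1}=f^n\circ f$. Definition of $\tau_2$: $J_0=\bigcap_{n\in\mathbb{N}} f^n(X)$, $J_n=f^{n-1}(X)\setminus f^n(X)$ for $n\in\mathbb{N}$; for $m\in\mathbb{N}$, $\mu_{K_m}(x)=\min\{1,n/m\}$ if $x\in J_n$ with $n\ge1$, and $\mu_{K_m}(x)=1$ otherwise; $\tau_2$ is generated by the base $\{K_m:m\in\mathbb{N}\}$. The space is normal if for any two closed fuzzy sets $F,G$ with $F\cap G=\emptyset$ there exist open fuzzy sets $U,V$ with $F\subseteq U$, $G\subseteq V$ and $U\cap V=\emptyset$. *)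

(* Defs.v *)
(* fuzzy sets are functions X -> R with values in [0,1]. *)
From Stdlib Require Import Reals.
Open Scope R_scope.

Section Fuzzy.
Context {X : Type} (f : X -> X).

Definition in_img (n : nat) (x : X) : Prop := exists y, Nat.iter n f y = x.

(* J_n = f^{n-1}(X) \ f^n(X), for n >= 1 *)
Definition inJ (n : nat) (x : X) : Prop := in_img (n - 1) x /\ ~ in_img n x.

Definition is_K (m : nat) (mu : X -> R) : Prop :=
  forall x,
    (forall n, (1 <= n)%nat -> inJ n x -> mu x = Rmin 1 (INR n / INR m)) /\
    ((forall n, (1 <= n)%nat -> ~ inJ n x) -> mu x = 1).

Definition tau2_base (mu : X -> R) : Prop := exists m, (1 <= m)%nat /\ is_K m mu.

(* open sets of tau2: the empty fuzzy set, and all (pointwise-sup) unions of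
   nonempty subfamilies of the base *)
Definition tau2_open (mu : X -> R) : Prop :=
  (forall x, mu x = 0) \/
  exists F : (X -> R) -> Prop,
    (exists g, F g) /\ (forall g, F g -> tau2_base g) /\
    forall x, is_lub (fun r => exists g, F g /\ r = g x) (mu x).

Definition tau2_closed (mu : X -> R) : Prop := tau2_open (fun x => 1 - mu x).

Definition tau2_normal : Prop :=
  forall F G : X -> R,
    tau2_closed F -> tau2_closed G -> (forall x, Rmin (F x) (G x) = 0) ->
    exists U V : X -> R,
      tau2_open U /\ tau2_open V /\
      (forall x, F x <= U x) /\ (forall x, G x <= V x) /\
      (forall x, Rmin (U x) (V x) = 0).
End Fuzzy.

(* Main.v *)
Require Import Defs.
From Stdlib Require Import Reals.
Open Scope R_scope.
From Stdlib Require Import Lra Lia Classical.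

Section S.
Context {X : Type} (f : X -> X).

Lemma K_bounds m g x : (1 <= m)%nat -> is_K f m g -> 0 < g x <= 1.
Proof.
  intros Hm HK. destruct (HK x) as [H1 H2].
  destruct (classic (exists n, (1 <= n)%nat /\ inJ f n x)) as [[n [Hn HJ]]|Hno].
  - rewrite (H1 n Hn HJ). split.
    + unfold Rmin; destruct (Rle_dec 1 (INR n / INR m)); [lra|].
      apply Rdiv_lt_0_compat; apply lt_0_INR; lia.
    + apply Rmin_l.
  - rewrite H2; [lra|]. intros n Hn HJ; apply Hno; eauto.
Qed.

Lemma open_bounds mu : tau2_open f mu -> forall x, 0 <= mu x <= 1.
Proof.
  intros [H0|[FF [[g Hg] [Hb Hl]]]] x.
  - rewrite H0; lra.
  - destruct (Hl x) as [Hu Hleast].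
    destruct (Hb g Hg) as [m [Hm HK]].
    pose proof (K_bounds m g x Hm HK).
    split.
    + assert (g x <= mu x) by (apply Hu; eauto). lra.
    + apply Hleast. intros r [h [Hh ->]].
      destruct (Hb h Hh) as [k [Hk HK']]. apply (K_bounds k h x Hk HK').
Qed.

Lemma base_cases g : tau2_base f g ->
  (forall y, g y = 1) \/ (forall y, inJ f 1 y -> g y <= 1/2).
Proof.
  intros [m [Hm HK]].
  destruct (Nat.eq_dec m 1) as [->|Hm2].
  - left. intros y. destruct (HK y) as [H1 H2].
    destruct (classic (exists n, (1 <= n)%nat /\ inJ f n y)) as [[n [Hn HJ]]|Hno].
    + rewrite (H1 n Hn HJ). change (INR 1) with 1.
      apply Rmin_left. unfold Rdiv. rewrite Rinv_1, Rmult_1_r.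
      apply (le_INR 1); lia.
    + apply H2. intros n Hn HJ; apply Hno; eauto.
  - right. intros y HJ. destruct (HK y) as [H1 _].
    rewrite (H1 1%nat (le_n 1) HJ).
    assert (2 <= INR m) by (apply (le_INR 2); lia).
    eapply Rle_trans; [apply Rmin_r|]. change (INR 1) with 1.
    unfold Rdiv. rewrite !Rmult_1_l. apply Rinv_le_contravar; lra.
Qed.

Lemma surj_all (Hs : forall x, in_img f 1 x) : forall n x, in_img f n x.
Proof.
  induction n; intros x.
  - exists x; reflexivity.
  - destruct (Hs x) as [y Hy]. destruct (IHn y) as [z Hz].
    exists z. simpl. rewrite Hz. exact Hy.
Qed.

Lemma base_one_surj (Hs : forall x, in_img f 1 x) g : tau2_base f g -> forall y, g y = 1.
Proof.
  intros [m [Hm HK]] y. destruct (HK y) as [_ H2]. apply H2.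
  intros n _ [_ Hn]. apply Hn, surj_all, Hs.
Qed.

Lemma fam_zero F FF :
  (forall g, FF g -> tau2_base f g) ->
  (forall x, is_lub (fun r => exists g, FF g /\ r = g x) (1 - F x)) ->
  tau2_open f (fun x => 1 - F x) ->
  forall g, FF g -> (forall y, g y = 1) -> forall y, F y = 0.
Proof.
  intros Hb Hl Ho g Hg H1 y.
  pose proof (open_bounds _ Ho y). simpl in H.
  destruct (Hl y) as [Hu _].
  assert (g y <= 1 - F y) by (apply Hu; eauto). rewrite H1 in H0. lra.
Qed.

Lemma rmin0 a b : Rmin a b = 0 -> a = 0 \/ b = 0.
Proof. unfold Rmin; destruct (Rle_dec a b); auto. Qed.

Lemma closed_le1 G : tau2_closed f G -> forall x, G x <= 1.
Proof. intros H x. pose proof (open_bounds _ H x). simpl in H0. lra. Qed.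

Lemma one_open : tau2_open f (fun _ => 1).
Proof.
  right. exists (fun g => forall y, g y = 1). split; [exists (fun _ => 1); auto|].
  split.
  - intros g Hg. exists 1%nat. split; [lia|]. intros y. split.
    + intros n Hn _. rewrite Hg. change (INR 1) with 1.
      symmetry. apply Rmin_left. unfold Rdiv. rewrite Rinv_1, Rmult_1_r.
      apply (le_INR 1); lia.
    + intros; auto.
  - intros x. split.
    + intros r [g [Hg ->]]. rewrite Hg; lra.
    + intros b Hb. apply Hb. exists (fun _ => 1). auto.
Qed.

Lemma closed_zero_or F : tau2_closed f F ->
  (forall x, F x = 1) \/ (exists x, inJ f 1 x /\ F x = 0 /\ ~ (forall y, F y = 0)) \/
  (forall y, F y = 0) \/ ((forall x, ~ inJ f 1 x) -> forall y, F y = 0).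
Proof.
  intros Hc. pose proof Hc as Hc'.
  destruct Hc as [H0|[FF [[g Hg] [Hb Hl]]]].
  - left. intros x. specialize (H0 x). lra.
  - right. right. right. intros HJ.
    assert (Hs : forall x, in_img f 1 x).
    { intros x. apply NNPP. intros Hn. apply (HJ x). split; auto.
      exists x; reflexivity. }
    eapply fam_zero; eauto. apply base_one_surj; auto.
Qed.

Lemma key F : tau2_closed f F -> forall x, inJ f 1 x -> F x = 0 -> forall y, F y = 0.
Proof.
  intros Hc x HJ Hx. pose proof Hc as Hc'.
  destruct Hc as [H0|[FF [[g0 Hg0] [Hb Hl]]]].
  - specialize (H0 x). simpl in H0. lra.
  - destruct (classic (exists g, FF g /\ forall y, g y = 1)) as [[g [Hg H1]]|Hno].
    + eapply fam_zero; eauto.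
    + exfalso. destruct (Hl x) as [_ Hleast].
      assert (1 - F x <= 1/2).
      { apply Hleast. intros r [g [Hg ->]].
        destruct (base_cases g (Hb g Hg)) as [H1|H2].
        - exfalso; eauto.
        - apply H2; auto. }
      lra.
Qed.

Lemma closed_surj F : tau2_closed f F -> (forall x, ~ inJ f 1 x) ->
  (forall y, F y = 1) \/ (forall y, F y = 0).
Proof.
  intros Hc HJ. pose proof Hc as Hc'.
  destruct Hc as [H0|[FF [[g Hg] [Hb Hl]]]].
  - left. intros x. specialize (H0 x). lra.
  - right.
    assert (Hs : forall x, in_img f 1 x).
    { intros x. apply NNPP. intros Hn. apply (HJ x). split; auto.
      exists x; reflexivity. }
    eapply fam_zero; eauto. apply base_one_surj; auto.
Qed.

Lemma one_zero F G : (forall x, Rmin (F x) (G x) = 0) -> tau2_closed f G ->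
  (forall y, F y = 1) -> forall y, G y = 0.
Proof.
  intros Hm Hc H1 y. specialize (Hm y). rewrite H1 in Hm.
  destruct (rmin0 _ _ Hm); auto; lra.
Qed.

Lemma zero_or F G : tau2_closed f F -> tau2_closed f G ->
  (forall x, Rmin (F x) (G x) = 0) -> (forall y, F y = 0) \/ (forall y, G y = 0).
Proof.
  intros HF HG Hm.
  destruct (classic (exists x, inJ f 1 x)) as [[x HJ]|Hno].
  - destruct (rmin0 _ _ (Hm x)) as [H|H].
    + left. eapply key; eauto.
    + right. eapply key; eauto.
  - assert (HJ : forall x, ~ inJ f 1 x) by (intros x Hx; apply Hno; eauto).
    destruct (closed_surj F HF HJ) as [H1|H1]; auto.
    right. eapply one_zero; eauto.
Qed.

End S.

Theorem proposition3p11 (X : Type) (x0 : X) (f : X -> X) :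
  @tau2_normal X f.
Proof.
  intros F G HF HG Hm.
  destruct (zero_or f F G HF HG Hm) as [H0|H0].
  - exists (fun _ => 0), (fun _ => 1). split; [left; auto|]. split; [apply (one_open f)|].
    split; [intros x; rewrite H0; lra|]. split; [apply (closed_le1 f); auto|].
    intros x. apply Rmin_left; lra.
  - exists (fun _ => 1), (fun _ => 0). split; [apply (one_open f)|]. split; [left; auto|].
    split; [apply (closed_le1 f); auto|]. split; [intros x; rewrite H0; lra|].
    intros x. apply Rmin_right; lra.
Qed.
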